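(* Let $\mathcal{W}$ be a finite set and $\Delta<0.5$. If $\mathbf{P}_1=(P_{1,w})_{w\in\mathcal{W}}$ and $\mathbf{P}_2=(P_{2,w})_{w\in\mathcal{W}}$ are probability vectors with $\max_wP_{1,w}\le1-\Delta$ and $\max_wP_{2,w}\le1-\Delta$, then $$\sum_{w\in\mathcal{W}}\sum_{j\in\mathcal{W}}(P_{1,w}\wedge P_{2,j})(1-P_{1,w})(1-P_{2,j})\ \ge\ \Delta(1-\Delta)^2+3\Delta^2(1-\Delta).$$
   Context: $a\wedge b=\min(a,b)$. *)

(* Defs.v *)
From mathcomp Require Import all_boot all_order all_algebra.
Set Implicit Arguments. Unset Strict Implicit. Unset Printing Implicit Defensive.
Import Order.TTheory GRing.Theory Num.Theory.
Local Open Scope ring_scope.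

Definition prob_vec (R : realFieldType) (W : finType) (P : W -> R) : Prop :=
  (forall w, 0 <= P w) /\ \sum_(w : W) P w = 1.

(* Main.v *)
Require Import Defs.
From mathcomp Require Import all_boot all_order all_algebra.
From mathcomp Require Import ring lra.
Import Order.TTheory GRing.Theory Num.Theory.
Local Open Scope ring_scope.
Ltac pos := repeat apply: mulr_ge0; lra.
Lemma pw (R : realFieldType) (a b D : R) : 0 < D -> D < 1/2 -> 0 <= a -> a <= 1 - D -> 0 <= b ->
  D * (1 - 2 * D) * ((1 - a) * Num.min a b) >=
  D * (D * Num.min (1-D) b - (1-D) * Num.min D b) * a +
  ((1-D) * ((1-D) * Num.min D b) - D * (D * Num.min (1-D) b)) * Num.min a D.
Proof.
move=> D0 D1 a0 a1 b0.
case: (leP a b) => h1; case: (leP D b) => h2; case: (leP (1-D) b) => h3; case: (leP a D) => h4; try nra.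
- have : 0 <= D * (1 - 2*D) * a * (D - a) by pos. nra.
- have : 0 <= D * (1 - 2*D) * (a - D) * (1 - D - a) by pos. nra.
- have : 0 <= D * (1 - 2*D) * a * (D - a) by pos. nra.
- have : 0 <= D * (1 - 2*D) * (a - D) * (1 - D - a) by pos.
  have : 0 <= D * D * (1 - D - b) * (a - D) by pos. nra.
- have : 0 <= (1 - 2*D) * a * (D - b) by pos.
  have : 0 <= (1 - 2*D) * a * D * (b - a) by pos. nra.
- have : 0 <= D * (1 - D) * (b - D) * (1 - D - a) by pos. nra.
- have : 0 <= (1 - 2*D) * b * (D - a) by pos. nra.
Qed.

Lemma summin (R : realFieldType) (W : finType) (P : W -> R) (Q : pred W) (D : R) (s : seq W) :
  0 <= D -> (forall w, 0 <= P w) ->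
  Num.min (\sum_(w <- s | Q w) P w) D <= \sum_(w <- s | Q w) Num.min (P w) D.
Proof.
move=> D0 P0; elim: s => [|x s IH]; first by rewrite !big_nil; move/min_idPl: D0 => ->.
rewrite !big_cons; case: (Q x) => //.
have S0 : 0 <= \sum_(w <- s | Q w) P w by apply: sumr_ge0.
move: IH; have := P0 x.
case: (leP (P x) D); case: (leP (\sum_(w <- s | Q w) P w) D);
  case: (leP (P x + \sum_(w <- s | Q w) P w) D); lra.
Qed.

Lemma sum2D (R : realFieldType) (W : finType) (P : W -> R) (D : R) :
  0 <= D -> D < 1/2 -> prob_vec P -> (forall w, P w <= 1 - D) ->
  2 * D <= \sum_w Num.min (P w) D.
Proof.
move=> D0 D1 [P0 P1] Pm.
case: (boolP [exists w, D < P w]).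
- move=> /existsP [w0 hw0].
  rewrite (bigD1 w0) //=.
  have := @summin _ _ P (fun w => w != w0) D (index_enum W) D0 P0.
  move: P1; rewrite (bigD1 w0) //= => P1.
  have := Pm w0.
  case: (leP (P w0) D) => h; first lra.
  case: (leP (\sum_(i | i != w0) P i) D); lra.
- rewrite negb_exists => /forallP H.
  rewrite (eq_bigr P); first lra.
  move=> w _; have := H w; rewrite -leNgt => h.
  by apply/min_idPl.
Qed.

Lemma keyL (R : realFieldType) (W : finType) (P : W -> R) (D b : R) :
  0 <= D -> D < 1/2 -> prob_vec P -> (forall w, P w <= 1 - D) -> 0 <= b ->
  (1 - D) * Num.min D b + D * Num.min (1 - D) b <= \sum_w (1 - P w) * Num.min (P w) b.
Proof.
move=> D0 D1 hP Pm b0.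
have [P0 P1] := hP.
case: (leP D 0) => hD.
  have -> : D = 0 by lra.
  rewrite mul0r addr0 subr0 mul1r.
  have -> : Num.min 0 b = 0 by apply/min_idPl.
  apply: sumr_ge0 => w _; apply: mulr_ge0; first by have := Pm w; lra.
  by rewrite le_min P0.
set m0 := Num.min D b; set m1 := Num.min (1 - D) b.
set al := D * (D * m1 - (1-D) * m0); set be := (1-D) * ((1-D) * m0) - D * (D * m1).
have H1 : \sum_w (al * P w + be * Num.min (P w) D) <=
          \sum_w D * (1 - 2 * D) * ((1 - P w) * Num.min (P w) b).
  apply: ler_sum => i _; apply: pw => //.
rewrite big_split -!mulr_sumr /= P1 in H1.
have H2 := @sum2D _ _ P D D0 D1 hP Pm.
have hbe : 0 <= be.
  have : 0 <= D * (1 - D) * (1 - 2 * D) by pos.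
  have : 0 <= b * (1 - 2 * D) by pos.
  rewrite /be /m0 /m1; case: (leP D b); case: (leP (1-D) b) => *; nra.
have hK : 0 < D * (1 - 2 * D) by apply: mulr_gt0; lra.
rewrite -(ler_pM2l hK).
have : 0 <= be * (\sum_w Num.min (P w) D - 2 * D) by apply: mulr_ge0; lra.
rewrite /al /be in H1 * => h.
nra.
Qed.

Theorem lemmaA7 (R : realFieldType) (W : finType) (Delta : R)
  (P1 P2 : W -> R) :
  0 <= Delta -> Delta < 1 / 2 ->
  prob_vec P1 -> prob_vec P2 ->
  (forall w : W, P1 w <= 1 - Delta) ->
  (forall w : W, P2 w <= 1 - Delta) ->
  \sum_(w : W) \sum_(j : W)
     (Num.min (P1 w) (P2 j) * (1 - P1 w) * (1 - P2 j))
  >= Delta * (1 - Delta) ^+ 2 + 3 * Delta ^+ 2 * (1 - Delta).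
Proof.
move=> D0 D1 hP1 hP2 M1 M2.
have [P10 _] := hP1; have [P20 _] := hP2.
rewrite exchange_big /=.
have H : \sum_j (1 - P2 j) * ((1 - Delta) * Num.min (P2 j) Delta + Delta * Num.min (P2 j) (1 - Delta))
   <= \sum_j \sum_w Num.min (P1 w) (P2 j) * (1 - P1 w) * (1 - P2 j).
  apply: ler_sum => j _.
  have -> : \sum_w Num.min (P1 w) (P2 j) * (1 - P1 w) * (1 - P2 j)
          = (1 - P2 j) * \sum_w (1 - P1 w) * Num.min (P1 w) (P2 j).
    rewrite mulr_sumr; apply: eq_bigr => w _; ring.
  apply: ler_wpM2l; first by have := M2 j; lra.
  rewrite (minC (P2 j)) (minC (P2 j)); apply: keyL => //.
apply: le_trans H.
under eq_bigr => j _ do rewrite mulrDr mulrCA (mulrCA (1 - P2 j) Delta).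
rewrite big_split -!mulr_sumr /=.
have A := @keyL _ _ P2 Delta Delta D0 D1 hP2 M2 D0.
have B := @keyL _ _ P2 Delta (1 - Delta) D0 D1 hP2 M2.
rewrite (_ : Num.min Delta Delta = Delta) in A; last by apply/min_idPl.
rewrite (_ : Num.min (1 - Delta) Delta = Delta) in A; last by apply/min_idPr; lra.
rewrite (_ : Num.min Delta (1 - Delta) = Delta) in B; last by apply/min_idPl; lra.
rewrite (_ : Num.min (1 - Delta) (1 - Delta) = 1 - Delta) in B; last by apply/min_idPl.
have B' := B ltac:(lra).
nra.
Qed.
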